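(* Let $X$ be a string of length $n$, let $k\ge 2$ be an integer, and let $b$ be the number of $k$-breaks in $X$. Then $\tfrac13 b \le \mathrm{BP}_k(X)\le b+3$.
   Context: For a string $Z$, $\mathrm{per}(Z)$ is its smallest period, i.e. the smallest $q\ge1$ with $Z[i]=Z[i+q]$ for all $0\le i<|Z|-q$. $Z$ is $q$-periodic if $\mathrm{per}(Z)\le q$. $X[i..j)$ denotes the substring $X[i]X[i+1]\cdots X[j-1]$. A position $i\in\{0,1,\dots,n-3k\}$ is a $k$-break in $X$ if $i$ is a multiple of $k$ and $\mathrm{per}(X[i..i+3k))>k$. The $k$-block periodicity $\mathrm{BP}_k(X)$ is the smallest $L$ such that $X=X_1\cdots X_L$ with every $X_\ell$ $k$-periodic. *)

(* Defs.v *)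
From mathcomp Require Import all_boot.
Set Implicit Arguments. Unset Strict Implicit. Unset Printing Implicit Defensive.

Section Strings.
Variable T : eqType.

Definition has_period (Z : seq T) (q : nat) : bool :=
  all (fun i => onth Z i == onth Z (i + q)) (iota 0 (size Z - q)).

Lemma has_period_exists (Z : seq T) :
  exists q, (0 < q) && has_period Z q.
Proof.
exists (size Z).+1; rewrite /has_period.
by have -> : size Z - (size Z).+1 = 0 by apply/eqP; rewrite subn_eq0 leqnSn.
Qed.

Definition per (Z : seq T) : nat := ex_minn (has_period_exists Z).

Definition periodic (q : nat) (Z : seq T) : bool := per Z <= q.

Definition substr (X : seq T) (i j : nat) : seq T := take (j - i) (drop i X).

Definition is_kbreak (k : nat) (X : seq T) (i : nat) : bool :=
  [&& i + 3 * k <= size X, k %| i & k < per (substr X i (i + 3 * k))].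

Definition num_kbreaks (k : nat) (X : seq T) : nat :=
  count (is_kbreak k X) (iota 0 (size X).+1).

Definition kblock_decomp (k : nat) (X : seq T) (L : nat) : Prop :=
  exists ss : seq (seq T),
    [/\ size ss = L, flatten ss = X & all (periodic k) ss].

Definition is_BP (k : nat) (X : seq T) (L : nat) : Prop :=
  kblock_decomp k X L /\ forall L', kblock_decomp k X L' -> L <= L'.

End Strings.

(* Main.v *)
Require Import Defs.
From mathcomp Require Import all_boot zify.
From Stdlib Require Classical_Prop.
Set Implicit Arguments. Unset Strict Implicit. Unset Printing Implicit Defensive.

Definition pd (T : eqType) (Z : seq T) (q : nat) : Prop :=
  forall i, i + q < size Z -> onth Z i = onth Z (i + q).

Lemma has_periodP (T : eqType) (Z : seq T) q : has_period Z q <-> pd Z q.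
Proof.
rewrite /has_period /pd; split.
  move=> /allP H i Hi; apply/eqP; apply: H; rewrite mem_iota; lia.
move=> H; apply/allP => i; rewrite mem_iota => Hi; apply/eqP; apply: H; lia.
Qed.

Lemma perP (T : eqType) (Z : seq T) :
  [/\ 0 < per Z, pd Z (per Z) & forall q, 0 < q -> pd Z q -> per Z <= q].
Proof.
rewrite /per; case: ex_minnP => m /andP[m0 /has_periodP Hm] Hmin; split => //.
by move=> q q0 /has_periodP Hq; apply: Hmin; rewrite q0.
Qed.

Lemma periodicP (T : eqType) k (Z : seq T) :
  periodic k Z <-> exists q, [/\ 0 < q, q <= k & pd Z q].
Proof.
rewrite /periodic; have [h1 h2 h3] := perP Z; split.
  by move=> h; exists (per Z).
by case=> q [q0 qk hq]; apply: leq_trans (h3 _ q0 hq) qk.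
Qed.

Lemma onth_drop (T : eqType) (Z : seq T) d i : onth (drop d Z) i = onth Z (d + i).
Proof. by rewrite !onthE map_drop nth_drop. Qed.

Lemma onth_take (T : eqType) (Z : seq T) m i : i < m -> onth (take m Z) i = onth Z i.
Proof. by move=> h; rewrite !onthE map_take nth_take. Qed.

Lemma pd_drop (T : eqType) (Z : seq T) q d : pd Z q -> pd (drop d Z) q.
Proof.
move=> H i; rewrite size_drop => hi; rewrite !onth_drop addnA; apply: H; lia.
Qed.

Lemma pd_take (T : eqType) (Z : seq T) q m : pd Z q -> pd (take m Z) q.
Proof.
move=> H i; rewrite size_take => hi.
have him : i + q < m by move: hi; case: ifP; lia.
rewrite !onth_take; try lia.
apply: H; move: hi; case: ifP; lia.
Qed.

Lemma pd_short (T : eqType) (Z : seq T) q : size Z <= q -> pd Z q.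
Proof. move=> h i hi; exfalso; move: h hi; lia. Qed.

Lemma periodic_short (T : eqType) k (Z : seq T) : 0 < k -> size Z <= k -> periodic k Z.
Proof. move=> k0 h; apply/periodicP; exists k; split => //; exact: pd_short. Qed.

Lemma periodic_drop (T : eqType) k (Z : seq T) d : periodic k Z -> periodic k (drop d Z).
Proof. by move/periodicP=> [q [q0 qk hq]]; apply/periodicP; exists q; split=> //; apply: pd_drop. Qed.

Lemma periodic_take (T : eqType) k (Z : seq T) d : periodic k Z -> periodic k (take d Z).
Proof. by move/periodicP=> [q [q0 qk hq]]; apply/periodicP; exists q; split=> //; apply: pd_take. Qed.

Lemma pd_mul (T : eqType) (Z : seq T) p : pd Z p ->
  forall m i, i + m * p < size Z -> onth Z i = onth Z (i + m * p).
Proof.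
move=> H; elim=> [|m IH] i hi; first by rewrite mul0n addn0.
rewrite mulSn in hi *.
rewrite IH; last lia.
have -> : i + (p + m * p) = (i + m * p) + p by lia.
rewrite H //; lia.
Qed.

Lemma pd_congr (T : eqType) (Z : seq T) p : pd Z p -> forall i j,
  i < size Z -> j < size Z -> i %% p = j %% p -> onth Z i = onth Z j.
Proof.
move=> H.
suff W : forall i j, i <= j -> j < size Z -> i %% p = j %% p -> onth Z i = onth Z j.
  move=> i j hi hj e; case: (leqP i j) => hij; first exact: W.
  by symmetry; apply: W => //; lia.
move=> i j hij hj e.
have : p %| j - i by rewrite -eqn_mod_dvd // e.
move/divnK => hd.
have -> : j = i + (j - i) %/ p * p by rewrite hd; lia.
apply: pd_mul => //; rewrite hd; lia.
Qed.

Lemma fine_wilf (T : eqType) s : forall p q (Z : seq T), p + q <= s -> 0 < p -> 0 < q ->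
  p + q <= size Z -> pd Z p -> pd Z q -> pd Z (gcdn p q).
Proof.
elim: s => [|s IH] p q Z hs p0 q0 hz hp hq; first lia.
have key : forall p q, 0 < p -> p < q -> p + q <= size Z -> pd Z p -> pd Z q -> pd Z (q - p).
  move=> a b a0 ab hz' ha hb i hi.
  case: (ltnP (i + b) (size Z)) => h.
    rewrite hb //. have -> : i + b = (i + (b - a)) + a by lia.
    by rewrite -ha //; lia.
  have e1 := ha (i - a) ltac:(lia).
  have e2 := hb (i - a) ltac:(lia).
  have -> : i = (i - a) + a by lia.
  have -> : i - a + a + (b - a) = (i - a) + b by lia.
  by rewrite -e1 e2.
case: (ltngtP p q) => hpq.
- have -> : gcdn p q = gcdn p (q - p).
    by rewrite -[in LHS](subnK (ltnW hpq)) gcdnDr.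
  apply: IH => //; try lia.
  exact: key.
- have -> : gcdn p q = gcdn (p - q) q.
    by rewrite gcdnC -[in LHS](subnK (ltnW hpq)) gcdnDr gcdnC.
  apply: IH => //; try lia.
  apply: key => //; lia.
- by subst q; rewrite gcdnn.
Qed.

Lemma pd_extend (T : eqType) (Z : seq T) p g a L : pd Z p -> 0 < p -> 0 < g -> g %| p ->
  p + g <= L -> a + L <= size Z ->
  (forall i, a <= i -> i + g < a + L -> onth Z i = onth Z (i + g)) -> pd Z g.
Proof.
move=> hp p0 g0 gp hL hZ hw i hi.
have [i' [h1 h2 h3]] : exists i', [/\ a <= i', i' < a + p & i' %% p = i %% p].
  have e1 := divn_eq a p. have e2 := ltn_pmod a p0. have e3 := ltn_pmod i p0.
  set c := a %/ p * p + i %% p.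
  have hc : c %% p = i %% p by rewrite /c modnMDl modn_mod.
  move: e1 e2 e3 hc; rewrite /c; set u := a %/ p * p; set v := a %% p; set w := i %% p => e1 e2 e3 hc.
  case: (leqP a (u + w)) => h.
    exists (u + w); split => //; lia.
  exists (u + w + p); split; try lia.
  by rewrite -modnDmr modnn addn0.
rewrite (pd_congr hp (i := i) (j := i')) //; try lia.
rewrite (pd_congr hp (i := i + g) (j := i' + g)); try lia.
  apply: hw; lia.
by rewrite -modnDml -h3 modnDml.
Qed.

Lemma merge_per (T : eqType) k (W : seq T) : 0 < k -> 3 * k <= size W ->
  periodic k (take (3 * k) W) -> periodic k (drop k W) -> periodic k W.
Proof.
move=> k0 hW /periodicP[p [p0 pk hp]] /periodicP[p' [p0' pk' hp']].
set O := drop k (take (3 * k) W).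
have hO : take (2 * k) (drop k W) = O by rewrite take_drop /O; congr (drop _ (take _ _)); lia.
have sO : size O = 2 * k by rewrite /O size_drop size_take; case: ifP; lia.
have hOp : pd O p by apply: pd_drop.
have hOp' : pd O p' by rewrite -hO; apply: pd_take.
have g0 : 0 < gcdn p p' by rewrite gcdn_gt0 p0.
have gp : gcdn p p' %| p by apply: dvdn_gcdl.
have gp' : gcdn p p' %| p' by apply: dvdn_gcdr.
have gle : gcdn p p' <= p by apply: dvdn_leq.
have hOg : pd O (gcdn p p') by apply: (@fine_wilf _ (p + p')) => //; lia.
set g := gcdn p p' in g0 gp gp' gle hOg.
have h1 : pd (take (3 * k) W) g.
  apply: (@pd_extend _ _ p g k (2 * k)) => //; first lia.
    rewrite size_take; case: ifP; lia.
  move=> i hi1 hi2.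
  have := hOg (i - k); rewrite sO /O !onth_drop => H.
  have -> : i = k + (i - k) by lia.
  rewrite -addnA; apply: H; lia.
have h2 : pd (drop k W) g.
  apply: (@pd_extend _ _ p' g 0 (2 * k)) => //; first lia.
    rewrite size_drop; lia.
  move=> i hi1 hi2.
  have := hOg i; rewrite sO -hO !onth_take; try lia.
  by move=> H; apply: H; lia.
apply/periodicP; exists g; split => //; first lia.
move=> i hi.
case: (ltnP (i + g) (3 * k)) => h.
  have := h1 i; rewrite size_take !onth_take; try lia.
  by move=> H; apply: H; case: ifP; lia.
have := h2 (i - k); rewrite size_drop !onth_drop => H.
have -> : i = k + (i - k) by lia.
rewrite -addnA; apply: H; lia.
Qed.

Lemma brk0 (T : eqType) k (X : seq T) :
  is_kbreak k X 0 = (3 * k <= size X) && (k < per (take (3 * k) X)).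
Proof. by rewrite /is_kbreak /substr add0n subn0 drop0 dvdn0. Qed.

Lemma nb_small (T : eqType) k (X : seq T) : size X < 3 * k -> num_kbreaks k X = 0.
Proof.
move=> h; rewrite /num_kbreaks (@eq_count _ _ pred0) ?count_pred0 // => i /=.
rewrite /is_kbreak; apply/negbTE; apply/negP => /and3P[h1 _ _]; lia.
Qed.

Lemma nb_drop (T : eqType) k (X : seq T) : 0 < k ->
  num_kbreaks k X = is_kbreak k X 0 + num_kbreaks k (drop k X).
Proof.
move=> k0.
case: (ltnP (size X) k) => hs.
  rewrite !nb_small ?size_drop; try lia.
  by rewrite brk0; have -> : (3 * k <= size X) = false by apply/negbTE; rewrite -ltnNge; lia.
rewrite /num_kbreaks size_drop.
have -> : (size X).+1 = k + (size X - k).+1 by lia.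
rewrite iotaD count_cat add0n.
have -> : count (is_kbreak k X) (iota 0 k) = is_kbreak k X 0.
  move: k0 hs; case Ek: k => [|k'] // _ hs.
  rewrite (_ : iota 0 k'.+1 = 0 :: iota 1 k') // /=.
  rewrite (@eq_in_count _ _ pred0) ?count_pred0 ?addn0 // => i; rewrite mem_iota => hi /=.
  rewrite /is_kbreak; apply/negbTE; apply/negP => /and3P[_ hd _].
  have := dvdn_leq _ hd; lia.
congr (_ + _).
have -> : k = k + 0 by lia.
rewrite iotaDl count_map addn0; apply: eq_count => i /=.
rewrite /is_kbreak /substr size_drop drop_drop dvdn_addr // .
have -> : k + i + 3 * k - (k + i) = i + 3 * k - i by lia.
have -> : (k + i + 3 * k <= size X) = (i + 3 * k <= size X - k) by lia.
by rewrite (addnC i k).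
Qed.

Lemma take_prefix (T : eqType) n (s t : seq T) : n <= size s -> take n (s ++ t) = take n s.
Proof.
move=> h; rewrite take_cat; case: ltnP => h2 //.
have -> : n - size s = 0 by lia.
by rewrite take0 cats0 take_oversize.
Qed.

Lemma upper (T : eqType) k (hk : 0 < k) : forall n (X : seq T), size X <= n ->
 (exists ss, [/\ flatten ss = X, all (periodic k) ss & size ss <= num_kbreaks k X + 3]) /\
 (is_kbreak k X 0 = false -> 3 * k <= size X -> exists s1 rest,
    [/\ X = s1 ++ flatten rest, 3 * k <= size s1, periodic k s1, all (periodic k) rest
      & size rest <= num_kbreaks k X + 2]).
Proof.
elim=> [|n IH] X hX.
  have -> : X = [::] by apply/nilP; rewrite /nilp; lia.
  split; first by exists [::].
  move=> _ /=; lia.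
have R : is_kbreak k X 0 = false -> 3 * k <= size X -> exists s1 rest,
    [/\ X = s1 ++ flatten rest, 3 * k <= size s1, periodic k s1, all (periodic k) rest
      & size rest <= num_kbreaks k X + 2].
  move=> hB h3.
  set X' := drop k X.
  have eb : num_kbreaks k X = num_kbreaks k X' by rewrite nb_drop // hB.
  have hper : periodic k (take (3 * k) X).
    by move: hB; rewrite brk0 h3 /= /periodic => /negbT; rewrite -leqNgt.
  have sX' : size X' = size X - k by rewrite size_drop.
  case: (boolP ((is_kbreak k X' 0 == false) && (3 * k <= size X'))) => [/andP[/eqP hB' h3'] | hc].
    have [_ /(_ hB' h3') [s1' [rest' [e1 e2 e3 e4 e5]]]] := IH X' ltac:(lia).
    exists (take k X ++ s1'), rest'; split.
    - by rewrite -catA -e1 cat_take_drop.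
    - rewrite size_cat; lia.
    - have sk : size (take k X) = k by rewrite size_takel //; lia.
      apply: (merge_per hk).
        rewrite size_cat; lia.
        have e : X = (take k X ++ s1') ++ flatten rest' by rewrite -catA -e1 cat_take_drop.
        by rewrite -(@take_prefix _ _ _ (flatten rest')) -?e // size_cat; lia.
      by rewrite drop_size_cat.
    - done.
    - by rewrite eb.
  case: (ltnP (size X') (3 * k)) => hs'.
    exists (take (3 * k) X), [:: drop (3 * k) X]; split => //.
    - by rewrite /= cats0 cat_take_drop.
    - rewrite size_takel //.
    - rewrite /= andbT; apply: periodic_short => //; rewrite size_drop; lia.
    - rewrite /=; lia.
  have hB' : is_kbreak k X' 0.
    by move: hc; rewrite hs' andbT; case: (is_kbreak k X' 0).
  have [[ss [f1 f2 f3]] _] := IH (drop (3 * k) X) ltac:(rewrite size_drop; lia).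
  exists (take (3 * k) X), ss; split => //.
  - by rewrite f1 cat_take_drop.
  - rewrite size_takel //.
  - have : num_kbreaks k X' = 1 + num_kbreaks k (drop k X') by rewrite nb_drop // hB'.
    rewrite (nb_drop (drop k X') hk) /X' !drop_drop.
    have -> : k + (k + k) = 3 * k by lia.
    rewrite eb /X'; lia.
split=> //.
case: (ltnP (size X) (3 * k)) => hs.
  exists [:: take k X; take k (drop k X); drop k (drop k X)]; split.
  - by rewrite /= cats0 !cat_take_drop.
  - rewrite /= !periodic_short //; rewrite ?size_take ?size_drop; try case: ifP; lia.
  - rewrite /=; lia.
case hB: (is_kbreak k X 0).
  have [[ss [f1 f2 f3]] _] := IH (drop k X) ltac:(rewrite size_drop; lia).
  exists (take k X :: ss); split.
  - by rewrite /= f1 cat_take_drop.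
  - rewrite /= f2 andbT; apply: periodic_short => //; rewrite size_take; case: ifP; lia.
  - rewrite (nb_drop X hk) hB /=; lia.
have [s1 [rest [e1 e2 e3 e4 e5]]] := R hB hs.
exists (s1 :: rest); split => //.
- by rewrite /= e3 e4.
- rewrite /=; lia.
Qed.

Definition cst k (l : nat) : nat := (0 < l) + (k < l) + (2 * k < l).

Lemma drop_decomp (T : eqType) k (hk : 0 < k) (rest : seq (seq T)) : forall d,
  rest != [::] -> all (periodic k) rest ->
  exists s2 rest2, [/\ drop d (flatten rest) = s2 ++ flatten rest2, periodic k s2,
     all (periodic k) rest2 & size rest2 < size rest].
Proof.
elim: rest => [|r t IH] d // _ /= /andP[pr pt].
rewrite drop_cat; case: ltnP => h.
  exists (drop d r), t; split => //; exact: periodic_drop.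
case: t IH pt => [|r' t'] IH pt.
  exists [::], [::]; split => //=; apply: periodic_short => //.
have [s2 [rest2 [f1 f2 f3 f4]]] := IH (d - size r) isT pt.
exists s2, rest2; split => //; move: f4 => /=; lia.
Qed.

Lemma lower_aux (T : eqType) k (hk : 0 < k) : forall n (X : seq T), size X <= n ->
  forall s rest, X = s ++ flatten rest -> periodic k s -> all (periodic k) rest ->
  num_kbreaks k X <= 3 * size rest + cst k (size s).
Proof.
elim=> [|n IH] X hX.
  by move=> *; rewrite nb_small //; lia.
have Hne : forall s rest, s != [::] -> X = s ++ flatten rest -> periodic k s ->
    all (periodic k) rest -> num_kbreaks k X <= 3 * size rest + cst k (size s).
  move=> s rest hs eX ps pr.
  have s0 : 0 < size s by case: (s) hs.
  have sX : size X = size s + size (flatten rest) by rewrite eX size_cat.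
  case: (ltnP k (size s)) => hks.
    have eX' : drop k X = drop k s ++ flatten rest by rewrite eX drop_cat hks.
    have := IH (drop k X) ltac:(rewrite size_drop; lia) (drop k s) rest eX' (periodic_drop _ ps) pr.
    rewrite size_drop (nb_drop X hk) /cst => H.
    case: (ltnP (size s) (3 * k)) => h3.
      have := leq_b1 (is_kbreak k X 0); lia.
    have -> : is_kbreak k X 0 = false.
      rewrite brk0 eX take_prefix // (_ : (3 * k <= _) = true) /=; last by rewrite size_cat; lia.
      have := periodic_take (3 * k) ps; rewrite /periodic; lia.
    lia.
  clear sX; case: rest eX pr => [|r t] eX pr.
    rewrite nb_small //; rewrite eX cats0; lia.
  have eX' : drop k X = drop (k - size s) (flatten (r :: t)).
    by rewrite eX drop_cat ltnNge hks.
  have [s2 [rest2 [f1 f2 f3 f4]]] := @drop_decomp T k hk (r :: t) (k - size s) isT pr.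
  rewrite -eX' in f1.
  have := IH (drop k X) ltac:(rewrite size_drop; lia) s2 rest2 f1 f2 f3.
  rewrite (nb_drop X hk) /cst => H.
  have := leq_b1 (is_kbreak k X 0); move: f4 => /=; lia.
move=> s rest eX ps pr.
case: (boolP (s == [::])) => hs; last exact: Hne.
move/eqP: hs => hs; subst s; rewrite /cst /=.
elim: rest eX pr => [|r t IHt] eX pr.
  by rewrite nb_small // eX; rewrite /=; lia.
move: pr => /= /andP[pr pt].
case: (boolP (r == [::])) => hr.
  move/eqP: hr => hr; subst r.
  have := IHt eX pt; lia.
have := Hne r t hr eX pr pt; rewrite /cst; lia.
Qed.

Lemma lower_bd (T : eqType) k (hk : 0 < k) (X : seq T) ss :
  flatten ss = X -> all (periodic k) ss -> num_kbreaks k X <= 3 * size ss.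
Proof.
case: ss => [|s rest] /= eX.
  by rewrite -eX nb_small //=; lia.
move=> /andP[ps pr].
have := lower_aux hk (leqnn (size X)) (esym eX) ps pr; rewrite /cst; lia.
Qed.

Lemma min_exists (P : nat -> Prop) : forall N n, n <= N -> P n ->
  exists m, P m /\ forall l, P l -> m <= l.
Proof.
elim=> [|N IH] n hn Pn.
  exists n; split => // l _; lia.
case: (Classical_Prop.classic (exists l, l < n /\ P l)) => [[l [hl Pl]]|H].
  apply: (IH l) => //; lia.
exists n; split => // l Pl.
case: (ltnP l n) => // hl; exfalso; apply: H; by exists l.
Qed.

Theorem lemma3p3 (T : eqType) (X : seq T) (k : nat) (hk : 2 <= k) :
  exists L, is_BP k X L /\
    num_kbreaks k X <= 3 * L /\ L <= num_kbreaks k X + 3.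
Proof.
have k0 : 0 < k by lia.
have [[ss [f1 f2 f3]] _] := upper k0 (leqnn (size X)).
have P0 : kblock_decomp k X (size ss) by exists ss.
have [m [Pm Hm]] := min_exists (leqnn (size ss)) P0.
exists m; split; first by split.
split.
  case: Pm => ss2 [e1 e2 e3]. rewrite -e1. exact: (lower_bd k0 e2 e3).
have := Hm _ P0; lia.
Qed.
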